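(* Fix $L\in\mathbb R$. There are $c>0$ and $C\in\mathbb R$ such that for all $n$ large enough $$|Q^{(n)}_L(x,\xi)|\le Ce^{-c(x+\xi)}$$ for all $x\ge0$ and $\xi\in\mathbb R$.
   Context: $q_s^{(n)}(y)=\frac1{2\pi i}\oint_{\Gamma_0}\frac{dw}{w}w^y(1-w)^{n-s}(1+1/w)^s$, $\Gamma_0$ a small counterclockwise circle around $0$. $b_n(\tau)=n(1+1/\sqrt2)+2^{-1/6}\tau n^{2/3}$. Scaling (integer parts neglected): $i=2^{-5/6}xn^{1/3}$, $u=n/\sqrt2+2^{-5/6}\xi n^{1/3}$. $Q^{(n)}_L(x,\xi)=2^{-5/6}n^{1/3}2^{-n/2}(\sqrt2+1)^{i+2^{-5/6}\xi n^{1/3}-2^{-1/6}Ln^{2/3}}q^{(n)}_{b_n(L)/2}(u+i)$. *)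

(* Defs.v *)
From Stdlib Require Import Reals ZArith Lra.
Open Scope R_scope.

Fixpoint fallR (a : R) (k : nat) : R :=
  match k with
  | O => 1
  | S k' => fallR a k' * (a - INR k')
  end.

Definition gbin (a : R) (k : nat) : R := fallR a k / INR (fact k).

(* q_s^{(n)}(y) = (1/2πi) ∮_{Γ0} dw/w w^y (1-w)^{n-s} (1+1/w)^s
   = Res_{w=0} w^{y-s-1} (1-w)^{n-s} (1+w)^s
   = [w^{s-y}] (1-w)^{n-s} (1+w)^s   (0 if s - y < 0),
   where the binomial series are expanded at 0 (valid for all integer exponents). *)
Definition q_coef (n : nat) (s y : Z) : R :=
  let m := (s - y)%Z in
  if (m <? 0)%Z then 0
  else sum_f_R0 (fun k => gbin (INR n - IZR s) k * (-1) ^ k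
                          * gbin (IZR s) (Z.to_nat m - k)) (Z.to_nat m).

Definition floorZ (r : R) : Z := (up r - 1)%Z.

Definition cube_root_n (n : nat) : R := Rpower (INR n) (1/3).

Definition b_n (n : nat) (tau : R) : R :=
  INR n * (1 + 1 / sqrt 2) + Rpower 2 (-1/6) * tau * Rpower (INR n) (2/3).

Definition i_idx (n : nat) (x : R) : Z :=
  floorZ (Rpower 2 (-5/6) * x * cube_root_n n).

Definition u_idx (n : nat) (xi : R) : Z :=
  floorZ (INR n / sqrt 2 + Rpower 2 (-5/6) * xi * cube_root_n n).

Definition Q_n (n : nat) (L x xi : R) : R :=
  Rpower 2 (-5/6) * cube_root_n n * Rpower 2 (- INR n / 2)
  * Rpower (sqrt 2 + 1)
      (IZR (i_idx n x) + Rpower 2 (-5/6) * xi * cube_root_n n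
       - Rpower 2 (-1/6) * L * Rpower (INR n) (2/3))
  * q_coef n (floorZ (b_n n L / 2)) (u_idx n xi + i_idx n x).

(* Main.v *)
Require Import Defs.
From Stdlib Require Import Reals ZArith Lra Lia.
From Coquelicot Require Import Coquelicot.
Open Scope R_scope.

Fixpoint sm (f : nat -> R) (n : nat) : R :=
  match n with O => 0 | S n' => sm f n' + f n' end.

Lemma sm_ext f g n : (forall i, (i < n)%nat -> f i = g i) -> sm f n = sm g n.
Proof. induction n; simpl; intros H; auto. rewrite IHn by (intros; apply H; lia). rewrite H by lia. auto. Qed.

Lemma sm_plus f g n : sm (fun i => f i + g i) n = sm f n + sm g n.
Proof. induction n; simpl; [lra|rewrite IHn; lra]. Qed.

Lemma sm_scal c f n : sm (fun i => c * f i) n = c * sm f n.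
Proof. induction n; simpl; [lra|rewrite IHn; lra]. Qed.

Lemma sm_le f g n : (forall i, (i < n)%nat -> f i <= g i) -> sm f n <= sm g n.
Proof. induction n; simpl; intros H; [lra|]. assert (f n <= g n) by (apply H; lia).
  assert (sm f n <= sm g n) by (apply IHn; intros; apply H; lia). lra. Qed.

Lemma sm_first f n : sm f (S n) = f O + sm (fun i => f (S i)) n.
Proof. induction n; simpl in *; [lra|]. rewrite IHn. lra. Qed.

Lemma sm_swap (a : nat -> nat -> R) n m :
  sm (fun i => sm (fun j => a i j) m) n = sm (fun j => sm (fun i => a i j) n) m.
Proof. induction n; simpl.
  - induction m; simpl; auto. rewrite <- IHm. lra.
  - rewrite IHn. rewrite <- sm_plus. auto. Qed.

Lemma sm_rev f n : sm (fun i => f (n - 1 - i)%nat) n = sm f n.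
Proof. induction n; auto.
  rewrite sm_first. replace (S n - 1 - 0)%nat with n by lia.
  rewrite (sm_ext (fun i => f (S n - 1 - S i)%nat) (fun i => f (n - 1 - i)%nat)) by (intros; f_equal; lia).
  rewrite IHn. simpl. lra. Qed.

Lemma sum_f_R0_sm f n : sum_f_R0 f n = sm f (S n).
Proof. induction n as [|n IH]; [simpl; lra|]. simpl sum_f_R0. rewrite IH. simpl. lra. Qed.

Lemma sm_zero n : sm (fun _ => 0) n = 0.
Proof. induction n as [|n IH]; simpl; [lra|rewrite IH; lra]. Qed.

Lemma sm_one_nonzero f n k : (k < n)%nat -> (forall i, (i < n)%nat -> i <> k -> f i = 0) -> sm f n = f k.
Proof. induction n as [|n IHn]; intros Hk H; [lia|]. simpl. destruct (Nat.eq_dec k n).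
  - subst. rewrite (sm_ext f (fun _ => 0)) by (intros; apply H; lia).
    rewrite sm_zero. lra.
  - rewrite IHn by (try lia; intros; apply H; lia). rewrite (H n) by lia. lra. Qed.

Open Scope C_scope.
Fixpoint csm (f : nat -> C) (n : nat) : C :=
  match n with O => 0 | S n' => csm f n' + f n' end.
Lemma csm_ext f g n : (forall i, (i < n)%nat -> f i = g i) -> csm f n = csm g n.
Proof. induction n; simpl; intros H; auto. rewrite IHn by (intros; apply H; lia). rewrite H by lia. auto. Qed.
Lemma csm_minus f g n : csm (fun i => f i - g i) n = csm f n - csm g n.
Proof. induction n; simpl; [ring|rewrite IHn; ring]. Qed.
Lemma csm_scal c f n : csm (fun i => c * f i) n = c * csm f n.
Proof. induction n; simpl; [ring|rewrite IHn; ring]. Qed.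
Lemma csm_Re f n : Re (csm f n) = sm (fun i => Re (f i)) n.
Proof. induction n; simpl; auto. rewrite <- IHn. auto. Qed.
Close Scope C_scope.

Lemma fallR_shift x i : fallR (x + 1) (S i) = (x + 1) * fallR x i.
Proof. induction i as [|i IHi]; [simpl; ring|].
  change (fallR (x+1) (S (S i))) with (fallR (x+1) (S i) * (x+1 - INR (S i))).
  rewrite IHi, S_INR. simpl fallR. ring. Qed.

Lemma gbin_0 x : gbin x 0 = 1.
Proof. unfold gbin; simpl; lra. Qed.

Lemma gbin_pascal x i : gbin (x + 1) (S i) = gbin x (S i) + gbin x i.
Proof. unfold gbin. rewrite fallR_shift. simpl fallR.
  replace (fact (S i)) with (S i * fact i)%nat by auto. rewrite mult_INR, S_INR.
  assert (0 < INR (fact i)) by (apply lt_0_INR, lt_O_fact).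
  assert (0 <= INR i) by apply pos_INR.
  field. split; lra. Qed.

Lemma fallR_zero_S i : fallR 0 (S i) = 0.
Proof. induction i as [|i IHi]; [simpl; lra|].
  change (fallR 0 (S (S i))) with (fallR 0 (S i) * (0 - INR (S i))). rewrite IHi. lra. Qed.

Lemma gbin_zero_S i : gbin 0 (S i) = 0.
Proof. unfold gbin. rewrite fallR_zero_S. lra. Qed.

Definition cf (a b k : nat) : R :=
  sm (fun i => gbin (INR a) i * (-1) ^ i * gbin (INR b) (k - i)) (S k).

Lemma cf_a0 b k : cf 0 b k = gbin (INR b) k.
Proof. unfold cf. rewrite sm_first. simpl INR. rewrite gbin_0.
  rewrite (sm_ext _ (fun _ => 0)) by (intros; rewrite gbin_zero_S; lra). rewrite sm_zero.
  replace (k - 0)%nat with k by lia. simpl. lra. Qed.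

Lemma cf_aS0 a b : cf (S a) b 0 = cf a b 0.
Proof. unfold cf. simpl. rewrite !gbin_0. lra. Qed.

Lemma cf_aSS a b k : cf (S a) b (S k) = cf a b (S k) - cf a b k.
Proof. unfold cf. rewrite sm_first. rewrite (sm_first (fun i => gbin (INR a) i * _ * _)).
  rewrite S_INR, !gbin_0.
  rewrite (sm_ext (fun i => gbin (INR a + 1) (S i) * (-1) ^ S i * gbin (INR b) (S k - S i))
     (fun i => gbin (INR a) (S i) * (-1) ^ S i * gbin (INR b) (S k - S i)
               + (-1) * (gbin (INR a) i * (-1) ^ i * gbin (INR b) (k - i))))
    by (intros; rewrite gbin_pascal; replace (S k - S i)%nat with (k - i)%nat by lia; simpl; ring).
  rewrite sm_plus, sm_scal. lra. Qed.

Lemma fallR_nat_zero b k : (b < k)%nat -> fallR (INR b) k = 0.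
Proof. induction k as [|k IH]; intros H; [lia|].
  destruct (Nat.eq_dec b k).
  - subst. simpl. lra.
  - simpl. rewrite IH by lia. lra. Qed.

Lemma gbin_nat_zero b k : (b < k)%nat -> gbin (INR b) k = 0.
Proof. intros H. unfold gbin. rewrite fallR_nat_zero by auto. lra. Qed.

Lemma cf_zero a b k : (a + b < k)%nat -> cf a b k = 0.
Proof. revert k. induction a as [|a IH]; intros k H.
  - rewrite cf_a0. apply gbin_nat_zero. lia.
  - destruct k; [lia|]. rewrite cf_aSS, !IH by lia. lra. Qed.

Open Scope C_scope.
Lemma RtoC_0' : RtoC 0 = 0. Proof. reflexivity. Qed.
Lemma RtoC_1' : RtoC 1 = 1. Proof. reflexivity. Qed.
Lemma RtoC_m1' : RtoC (-1) = - (1). Proof. unfold RtoC, Copp, C1. simpl. apply injective_projections; simpl; lra. Qed.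
Ltac cring := rewrite ?RtoC_0', ?RtoC_1', ?RtoC_m1'; ring.
Definition ceval (c : nat -> R) (z : C) (d : nat) : C :=
  csm (fun k => RtoC (c k) * z ^ k) (S d).

Lemma ceval_S c z d : ceval c z (S d) = ceval c z d + RtoC (c (S d)) * z ^ (S d).
Proof. reflexivity. Qed.

Definition sh (c : nat -> R) (k : nat) : R := match k with O => 0%R | S k' => c k' end.

Lemma ceval_sh c z d : ceval (sh c) z (S d) = z * ceval c z d.
Proof. induction d as [|d IH].
  - unfold ceval. simpl. ring.
  - rewrite ceval_S, IH, ceval_S. simpl sh. rewrite (Cpow_S z (S d)). ring. Qed.

Lemma ceval_ext c1 c2 z d : (forall k, (k <= d)%nat -> c1 k = c2 k) -> ceval c1 z d = ceval c2 z d.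
Proof. intros H. unfold ceval. apply csm_ext. intros. rewrite H by lia. auto. Qed.

Lemma ceval_lin c1 c2 (s : R) z d : ceval (fun k => c1 k + s * c2 k)%R z d = ceval c1 z d + RtoC s * ceval c2 z d.
Proof. induction d as [|d IH].
  - unfold ceval; simpl. rewrite RtoC_plus, RtoC_mult. ring.
  - rewrite !ceval_S, IH. rewrite RtoC_plus, RtoC_mult. ring. Qed.

Lemma ceval_gbin b z : ceval (gbin (INR b)) z b = (1 + z) ^ b.
Proof. induction b as [|b IH].
  - unfold ceval. simpl. rewrite gbin_0. cring.
  - rewrite (ceval_ext _ (fun k => gbin (INR b) k + 1 * sh (gbin (INR b)) k)%R).
    + rewrite ceval_lin, ceval_sh, ceval_S, IH, gbin_nat_zero by lia. simpl Cpow.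
      cring.
    + intros [|k] _; simpl sh.
      * rewrite !gbin_0. lra.
      * rewrite S_INR, gbin_pascal. lra. Qed.

Lemma ceval_cf a b z : ceval (cf a b) z (a + b) = (1 - z) ^ a * (1 + z) ^ b.
Proof. induction a as [|a IH].
  - simpl. rewrite (ceval_ext _ (gbin (INR b))) by (intros; apply cf_a0).
    rewrite ceval_gbin. ring.
  - rewrite (ceval_ext _ (fun k => cf a b k + (-1) * sh (cf a b) k)%R).
    + replace (S a + b)%nat with (S (a + b)) by lia.
      rewrite ceval_lin, ceval_sh, ceval_S, IH, (cf_zero a b (S (a+b))) by lia.
      simpl Cpow. cring.
    + intros [|k] _; simpl sh.
      * rewrite cf_aS0. lra.
      * rewrite cf_aSS. lra. Qed.

Lemma cpow_polar (r t : R) k : (RtoC r * (cos t, sin t)) ^ k = (r ^ k * cos (INR k * t), r ^ k * sin (INR k * t))%R.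
Proof. induction k as [|k IH].
  - simpl. rewrite Rmult_0_l, cos_0, sin_0. unfold C1, RtoC. f_equal; lra.
  - rewrite Cpow_S, IH. rewrite S_INR.
    replace ((INR k + 1) * t)%R with (INR k * t + t)%R by ring.
    rewrite cos_plus, sin_plus. unfold Cmult, RtoC; simpl. f_equal; ring. Qed.

Close Scope C_scope.
Lemma Re_ceval c r t d M :
  Re (Cmult (ceval c (Cmult (RtoC r) (cos t, sin t)) d) (cos (INR M * t), - sin (INR M * t)))
  = sm (fun k => c k * r ^ k * cos ((INR k - INR M) * t)) (S d).
Proof. unfold ceval. rewrite Cmult_comm, <- csm_scal, csm_Re. apply sm_ext. intros k _.
  rewrite cpow_polar. unfold Cmult, RtoC, Re; simpl.
  replace ((INR k - INR M) * t)%R with (INR k * t - INR M * t)%R by ring.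
  rewrite cos_minus. ring. Qed.

Lemma cos_tele phi n :
  2 * sin (phi / 2) * sm (fun j => cos (INR j * phi)) n = sin ((INR n - 1/2) * phi) + sin (phi / 2).
Proof. induction n as [|n IH].
  - simpl. replace ((0 - 1/2) * phi) with (- (phi/2)) by field. rewrite sin_neg. lra.
  - simpl sm. rewrite Rmult_plus_distr_l, IH. rewrite S_INR.
    replace ((INR n + 1 - 1/2) * phi) with (INR n * phi + phi/2) by field.
    replace ((INR n - 1/2) * phi) with (INR n * phi - phi/2) by field.
    rewrite sin_plus, sin_minus. ring. Qed.

Lemma cos_sum_zero (l N : nat) : (0 < l < N)%nat ->
  sm (fun j => cos (INR j * (2 * PI * INR l / INR N))) N = 0.
Proof. intros [H1 H2]. set (phi := 2 * PI * INR l / INR N).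
  assert (HN : 0 < INR N) by (apply lt_0_INR; lia).
  assert (Hl : 0 < INR l) by (apply lt_0_INR; lia).
  assert (HlN : INR l < INR N) by (apply lt_INR; lia).
  assert (Hs : 0 < sin (phi / 2)).
  { apply sin_gt_0; unfold phi.
    - apply Rmult_lt_0_compat; [|lra]. apply Rdiv_lt_0_compat; [|lra]. pose proof PI_RGT_0. nra.
    - replace (2 * PI * INR l / INR N / 2) with (PI * (INR l / INR N)) by (field; lra).
      pose proof PI_RGT_0. assert (INR l / INR N < 1) by (apply Rmult_lt_reg_r with (INR N); [lra| unfold Rdiv; rewrite Rmult_assoc, Rinv_l; lra]).
      rewrite <- (Rmult_1_r PI) at 2. apply Rmult_lt_compat_l; lra. }
  pose proof (cos_tele phi N) as T.
  replace ((INR N - 1/2) * phi) with (- (phi/2) + 2 * INR l * PI) in T by (unfold phi; field; lra).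
  rewrite sin_period, sin_neg in T.
  assert (2 * sin (phi / 2) * sm (fun j => cos (INR j * phi)) N = 0) by lra.
  apply Rmult_integral in H. destruct H; lra. Qed.

Lemma cos_sum_gen (k M N : nat) : (k < M + N)%nat -> (M < k + N)%nat ->
  sm (fun j => cos ((INR k - INR M) * (INR j * (2 * PI / INR N)))) N = if Nat.eq_dec k M then INR N else 0.
Proof. intros Ha Hb. destruct (Nat.eq_dec k M).
  - subst. rewrite (sm_ext _ (fun _ => 1)) by (intros; replace (INR M - INR M) with 0 by ring; rewrite Rmult_0_l; apply cos_0).
    clear. induction N; simpl; [lra|]. rewrite IHN. destruct N; simpl; lra.
  - assert (HN : (0 < N)%nat) by lia. assert (0 < INR N) by (apply lt_0_INR; lia).
    destruct (Nat.lt_ge_cases M k).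
    + rewrite <- (cos_sum_zero (k - M) N) by lia. apply sm_ext. intros j _. f_equal.
      rewrite minus_INR by lia. field. lra.
    + rewrite <- (cos_sum_zero (M - k) N) by lia. apply sm_ext. intros j _.
      rewrite <- cos_neg. f_equal. rewrite minus_INR by lia. field. lra. Qed.

Definition zc (r t : R) : C := Cmult (RtoC r) (cos t, sin t).

Lemma filter_id (c : nat -> R) d M N r : (M <= d)%nat -> (d < N)%nat ->
  INR N * (c M * r ^ M) =
  sm (fun j => sm (fun k => c k * r ^ k * cos ((INR k - INR M) * (INR j * (2 * PI / INR N)))) (S d)) N.
Proof. intros HM HN. rewrite sm_swap.
  rewrite (sm_ext _ (fun k => (c k * r ^ k) * (if Nat.eq_dec k M then INR N else 0))).
  - rewrite (sm_one_nonzero _ (S d) M) by (first [lia | intros i _ Hi; destruct (Nat.eq_dec i M); [lia|ring]]).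
    destruct (Nat.eq_dec M M); [ring|lia].
  - intros k Hk. rewrite <- cos_sum_gen by lia. rewrite <- sm_scal. auto. Qed.

Lemma sm_abs f n : Rabs (sm f n) <= sm (fun i => Rabs (f i)) n.
Proof. induction n; simpl. rewrite Rabs_R0; lra. eapply Rle_trans; [apply Rabs_triang|]. lra. Qed.

Lemma coef_filter (c : nat -> R) d M N r : (M <= d)%nat -> (d < N)%nat -> 0 <= r ->
  INR N * (Rabs (c M) * r ^ M) <= sm (fun j => Cmod (ceval c (zc r (INR j * (2 * PI / INR N))) d)) N.
Proof. intros HM HN Hr.
  replace (Rabs (c M) * r ^ M) with (Rabs (c M * r ^ M))
    by (rewrite Rabs_mult, (Rabs_pos_eq (r ^ M)) by (apply pow_le; auto); auto).
  assert (0 <= INR N) by apply pos_INR.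
  replace (INR N * Rabs (c M * r ^ M)) with (Rabs (INR N * (c M * r ^ M)))
    by (rewrite Rabs_mult, (Rabs_pos_eq (INR N)); auto).
  rewrite (filter_id c d M N r) by auto.
  eapply Rle_trans; [apply sm_abs|]. apply sm_le. intros j _.
  set (t := INR j * (2 * PI / INR N)).
  replace (sm (fun k => c k * r ^ k * cos ((INR k - INR M) * t)) (S d))
    with (Re (Cmult (ceval c (zc r t) d) (cos (INR M * t), - sin (INR M * t)))) by apply Re_ceval.
  eapply Rle_trans; [apply re_le_Cmod|]. rewrite Cmod_mult.
  assert (Cmod (cos (INR M * t), - sin (INR M * t)) = 1).
  { unfold Cmod; simpl. pose proof (sin2_cos2 (INR M * t)). unfold Rsqr in H0.
    match goal with |- sqrt ?e = 1 => replace e with 1 by nra end. apply sqrt_1. }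
  rewrite H0. lra. Qed.

Lemma exp_pow y n : exp y ^ n = exp (INR n * y).
Proof. induction n as [|n IH]; simpl; [rewrite Rmult_0_l, exp_0; auto|].
  rewrite IH, <- exp_plus. f_equal. destruct n; simpl; ring. Qed.

Lemma pow_exp_le u y n : 0 <= u -> u <= exp y -> u ^ n <= exp (INR n * y).
Proof. intros. rewrite <- exp_pow. apply pow_incr. lra. Qed.

Lemma sq_le_imp x y : 0 <= x -> 0 <= y -> x ^ 2 <= y ^ 2 -> x <= y.
Proof. intros. destruct (Rle_dec x y); auto. nra. Qed.

Lemma pow_sq_swap x n : (x ^ n) ^ 2 = (x ^ 2) ^ n.
Proof. rewrite <- !pow_mult. f_equal. lia. Qed.

Lemma cmod_bound a b r t : 0 <= r < 1 ->
  Cmod (ceval (cf a b) (zc r t) (a + b)) <=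
  (1 - r) ^ a * (1 + r) ^ b * exp (- (r * (INR b / (1 + r) ^ 2 - INR a / (1 - r) ^ 2)) * (1 - cos t)).
Proof. intros Hr. rewrite ceval_cf, Cmod_mult, !Cmod_pow.
  set (X1 := Cmod (Cminus 1 (zc r t))). set (X2 := Cmod (Cplus 1 (zc r t))).
  set (A := (1 - r) ^ 2). set (B := (1 + r) ^ 2). set (v := 2 * r * (1 - cos t)).
  pose proof (COS_bound t) as Hc. pose proof (sin2_cos2 t) as Hsc. unfold Rsqr in Hsc.
  assert (HA : 0 < A) by (unfold A; apply pow_lt; lra).
  assert (HB : 0 < B) by (unfold B; apply pow_lt; lra).
  assert (Hv : 0 <= v <= 4 * r) by (unfold v; split; nra).
  assert (E1 : X1 ^ 2 = A + v).
  { unfold X1. rewrite Cmod2_alt. unfold zc, A, v, Cminus, Cplus, Copp, Cmult, RtoC, C1, Re, Im; simpl. nra. }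
  assert (E2 : X2 ^ 2 = B - v).
  { unfold X2. rewrite Cmod2_alt. unfold zc, B, v, Cminus, Cplus, Copp, Cmult, RtoC, C1, Re, Im; simpl. nra. }
  assert (HvB : v <= B) by (unfold B; nra).
  apply sq_le_imp.
  - apply Rmult_le_pos; apply pow_le; apply Cmod_ge_0.
  - apply Rmult_le_pos; [apply Rmult_le_pos; apply pow_le; lra|]. apply Rlt_le, exp_pos.
  - rewrite !Rpow_mult_distr, !pow_sq_swap, E1, E2.
    change ((1 - r) ^ 2) with A. change ((1 + r) ^ 2) with B. rewrite exp_pow.
    replace (exp (INR 2 * (- (r * (INR b / B - INR a / A)) * (1 - cos t))))
      with (exp (INR a * (v / A)) * exp (INR b * (- (v / B)))).
    2:{ rewrite <- exp_plus. f_equal. unfold v. simpl INR. field. split; lra. }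
    replace (A + v) with (A * (1 + v / A)) by (field; lra).
    replace (B - v) with (B * (1 - v / B)) by (field; lra).
    rewrite !Rpow_mult_distr.
    assert (P1 : 0 <= (1 + v / A) ^ a <= exp (INR a * (v / A))).
    { split. apply pow_le. assert (0 <= v / A) by (apply Rdiv_le_0_compat; lra). lra.
      apply pow_exp_le. assert (0 <= v / A) by (apply Rdiv_le_0_compat; lra). lra.
      pose proof (exp_ineq1_le (v / A)). lra. }
    assert (P2 : 0 <= (1 - v / B) ^ b <= exp (INR b * - (v / B))).
    { assert (v / B <= 1) by (apply Rmult_le_reg_r with B; [lra|]; unfold Rdiv; rewrite Rmult_assoc, Rinv_l; lra).
      assert (0 <= v / B) by (apply Rdiv_le_0_compat; lra).
      split. apply pow_le. lra. apply pow_exp_le. lra. pose proof (exp_ineq1_le (- (v / B))). lra. }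
    assert (0 <= A ^ a) by (apply pow_le; lra). assert (0 <= B ^ b) by (apply pow_le; lra).
    apply Rle_trans with (A ^ a * exp (INR a * (v / A)) * (B ^ b * exp (INR b * - (v / B)))).
    + apply Rmult_le_compat.
      * apply Rmult_le_pos; lra.
      * apply Rmult_le_pos; lra.
      * apply Rmult_le_compat_l; lra.
      * apply Rmult_le_compat_l; lra.
    + right. ring. Qed.

Lemma sin_lin x : 0 <= x <= 2 -> 0.32 * x <= sin x.
Proof. intros Hx. assert (x <= PI) by (pose proof PI2_3_2; lra).
  destruct (SIN x) as [H1 _]; try lra.
  unfold sin_lb, sin_approx, sin_term in H1. cbn [sum_f_R0] in H1.
  rewrite !INR_IZR_INZ in H1. cbn -[pow IZR] in H1.
  assert (x^2 <= 4) by nra. assert (0 <= x ^ 5) by (apply pow_le; lra).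
  assert (x ^ 7 <= 64 * x) by (replace (x^7) with (x * (x^2)^3) by ring; 
     assert (0 <= x^2) by nra; assert ((x^2)^3 <= 4^3) by (apply pow_incr; lra); nra).
  assert (H1' : x - x^3/6 + x^5/120 - x^7/5040 <= sin x).
  { replace ((-1)^0) with 1 in H1 by ring. replace ((-1)^1) with (-1) in H1 by ring.
    replace ((-1)^2) with 1 in H1 by ring. replace ((-1)^3) with (-1) in H1 by ring.
    replace (x^1) with x in H1 by ring. lra. }
  assert (x^3 <= 4 * x) by (replace (x^3) with (x * x^2) by ring; nra). lra. Qed.

Lemma one_minus_cos t : 0 <= t <= PI -> t ^ 2 / 20 <= 1 - cos t.
Proof. intros Ht. replace t with (2 * (t / 2)) at 2 by field. rewrite cos_2a_sin.
  assert (0.32 * (t/2) <= sin (t/2)) by (apply sin_lin; pose proof PI_4; lra).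
  assert (0 <= t / 2) by lra. nra. Qed.

Lemma exp_neg_le_inv x : 0 < x -> exp (- x) <= 1 / x.
Proof. intros. rewrite exp_Ropp. pose proof (exp_ineq1_le x). pose proof (exp_pos x).
  apply Rmult_le_reg_r with (exp x); [lra|]. unfold Rdiv. rewrite Rmult_1_l, Rinv_l by lra.
  apply Rmult_le_reg_l with x; [lra|]. field_simplify; try lra. Qed.

Lemma sm_le_const f n c : (forall i, (i < n)%nat -> f i <= c) -> sm f n <= INR n * c.
Proof. induction n as [|n IH]; intros H; [simpl; lra|]. change (sm f (S n)) with (sm f n + f n). rewrite S_INR.
  assert (sm f n <= INR n * c) by (apply IH; intros; apply H; lia). assert (f n <= c) by (apply H; lia). lra. Qed.

Lemma gsum_tail (al : R) (J : nat) : 0 < al -> (1 <= J)%nat -> forall M, (J <= M)%nat ->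
  sm (fun d => exp (- (al * INR d ^ 2))) (S M) <= INR J + 1 + (1 / al) * (1 / INR J - 1 / INR M).
Proof. intros Hal HJ M HM. induction HM as [|M HM IH].
  - apply Rle_trans with (INR (S J) * 1).
    + apply sm_le_const. intros. rewrite <- exp_0. apply exp_le_3 || (apply Rlt_le; apply exp_increasing; nra) || idtac.
      pose proof (pos_INR i). destruct (Req_dec (INR i) 0).
      * rewrite H1. simpl. rewrite Rmult_0_l, Rmult_0_r, Ropp_0. lra.
      * left. apply exp_increasing. assert (0 < INR i ^ 2) by (apply pow_lt; lra). nra.
    + rewrite S_INR. assert (0 < INR J) by (apply lt_0_INR; lia). 
      replace (1 / INR J - 1 / INR J) with 0 by ring. lra.
  - cbn [sm] in IH |- *.
    assert (HMp : 1 <= INR M) by (apply (le_INR 1); lia).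
    assert (E: exp (- (al * INR (S M) ^ 2)) <= (1 / al) * (1 / INR M - 1 / INR (S M))).
    { rewrite S_INR. eapply Rle_trans; [apply exp_neg_le_inv; apply Rmult_lt_0_compat; [lra| apply pow_lt; lra]|].
      replace ((1 / al) * (1 / INR M - 1 / (INR M + 1))) with (1 / (al * (INR M * (INR M + 1)))) by (field; lra).
      apply Rmult_le_compat_l; [lra|]. apply Rinv_le_contravar.
      - apply Rmult_lt_0_compat; [lra|]. nra.
      - apply Rmult_le_compat_l; [lra|]. simpl. nra. }
    lra. Qed.

Lemma exp_mono x y : x <= y -> exp x <= exp y.
Proof. intros [H|H]. left; apply exp_increasing; auto. subst; lra. Qed.

Lemma nat_above x : 0 < x -> exists J : nat, (1 <= J)%nat /\ x < INR J <= x + 1.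
Proof. intros Hx. destruct (archimed x) as [A B].
  assert (Hup : (0 < up x)%Z) by (apply lt_IZR; lra).
  exists (Z.to_nat (up x)). rewrite INR_IZR_INZ, Znat.Z2Nat.id by lia. split; [lia|lra]. Qed.

Lemma cos_2pi_minus t : cos (2 * PI - t) = cos t.
Proof. rewrite cos_minus, cos_2PI, sin_2PI. ring. Qed.

Lemma gauss_sum K tau N : 0 < tau -> tau ^ 2 <= K -> (1 <= N)%nat -> tau <= INR N ->
  sm (fun j => exp (- K * (1 - cos (INR j * (2 * PI / INR N))))) N <= INR N * (8 / tau).
Proof. intros Ht HK HN HtN.
  assert (HNr : 0 < INR N) by lra.
  set (al := K / INR N ^ 2).
  assert (Hal : 0 < al) by (unfold al; apply Rdiv_lt_0_compat; [nra| apply pow_lt; lra]).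
  set (g := fun d : nat => exp (- (al * INR d ^ 2))).
  assert (Hg1 : forall d, g d <= 1).
  { intros d. unfold g. rewrite <- exp_0. apply exp_mono. pose proof (pos_INR d). assert (0 <= INR d ^ 2) by nra. nra. }
  assert (Hg0 : forall d, 0 <= g d) by (intros; unfold g; left; apply exp_pos).
  assert (Hpi := PI_RGT_0). assert (Hpi3 : 3 <= PI) by (pose proof PI2_3_2; lra).
  assert (Hterm : forall j, (j < N)%nat -> exp (- K * (1 - cos (INR j * (2 * PI / INR N)))) <= g j + g (N - j)%nat).
  { intros j Hj. assert (HjN : INR j < INR N) by (apply lt_INR; lia).
    assert (Hj0 : 0 <= INR j) by apply pos_INR.
    destruct (le_lt_dec (2 * j) N) as [Hle|Hlt].
    - assert (H2j : 2 * INR j <= INR N) by (replace (2 * INR j) with (INR (2 * j)) by (rewrite mult_INR; simpl; ring); apply le_INR; auto).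
      set (t := INR j * (2 * PI / INR N)).
      assert (Ht0 : 0 <= t <= PI).
      { unfold t. split. apply Rmult_le_pos; [lra|]. apply Rdiv_le_0_compat; lra.
        replace (INR j * (2 * PI / INR N)) with (PI * (2 * INR j / INR N)) by (field; lra).
        assert (2 * INR j / INR N <= 1) by (apply Rmult_le_reg_r with (INR N); [lra|]; unfold Rdiv; rewrite Rmult_assoc, Rinv_l; lra).
        assert (0 <= 2 * INR j / INR N) by (apply Rdiv_le_0_compat; lra). nra. }
      pose proof (one_minus_cos t Ht0).
      assert (al * INR j ^ 2 <= K * (1 - cos t)).
      { apply Rle_trans with (K * (t ^ 2 / 20)); [|apply Rmult_le_compat_l; nra].
        unfold al, t. replace (K / INR N ^ 2 * INR j ^ 2) with (K * (INR j ^ 2 / INR N ^ 2)) by (field; lra).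
        apply Rmult_le_compat_l; [nra|]. 
        replace ((INR j * (2 * PI / INR N)) ^ 2 / 20) with ((INR j ^ 2 / INR N ^ 2) * (4 * PI ^ 2 / 20)) by (field; lra).
        assert (0 <= INR j ^ 2 / INR N ^ 2) by (apply Rdiv_le_0_compat; [nra|apply pow_lt; lra]). assert (9 <= PI ^ 2) by nra. nra. }
      apply Rle_trans with (g j); [|pose proof (Hg0 (N - j)%nat); lra].
      unfold g. apply exp_mono. fold t. nra.
    - assert (H2j : INR N < 2 * INR j) by (replace (2 * INR j) with (INR (2 * j)) by (rewrite mult_INR; simpl; ring); apply lt_INR; auto).
      assert (Em : INR (N - j) = INR N - INR j) by (apply minus_INR; lia).
      set (t := INR (N - j) * (2 * PI / INR N)).
      assert (Et : INR j * (2 * PI / INR N) = 2 * PI - t) by (unfold t; rewrite Em; field; lra).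
      rewrite Et, cos_2pi_minus.
      assert (Ht0 : 0 <= t <= PI).
      { unfold t. rewrite Em. split. apply Rmult_le_pos; [lra|]. apply Rdiv_le_0_compat; lra.
        replace ((INR N - INR j) * (2 * PI / INR N)) with (PI * (2 * (INR N - INR j) / INR N)) by (field; lra).
        assert (2 * (INR N - INR j) / INR N <= 1) by (apply Rmult_le_reg_r with (INR N); [lra|]; unfold Rdiv; rewrite Rmult_assoc, Rinv_l; lra).
        assert (0 <= 2 * (INR N - INR j) / INR N) by (apply Rdiv_le_0_compat; lra). nra. }
      pose proof (one_minus_cos t Ht0).
      assert (al * INR (N - j) ^ 2 <= K * (1 - cos t)).
      { apply Rle_trans with (K * (t ^ 2 / 20)); [|apply Rmult_le_compat_l; nra].
        unfold al, t. replace (K / INR N ^ 2 * INR (N - j) ^ 2) with (K * (INR (N - j) ^ 2 / INR N ^ 2)) by (field; lra).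
        apply Rmult_le_compat_l; [nra|]. 
        replace ((INR (N - j) * (2 * PI / INR N)) ^ 2 / 20) with ((INR (N - j) ^ 2 / INR N ^ 2) * (4 * PI ^ 2 / 20)) by (field; lra).
        assert (0 <= INR (N - j) ^ 2 / INR N ^ 2) by (apply Rdiv_le_0_compat; [nra|apply pow_lt; lra]). assert (9 <= PI ^ 2) by nra. nra. }
      apply Rle_trans with (g (N - j)%nat); [|pose proof (Hg0 j); lra].
      unfold g. apply exp_mono. nra. }
  apply Rle_trans with (sm (fun j => g j + g (N - j)%nat) N); [apply sm_le; auto|].
  rewrite sm_plus.
  assert (R1 : sm (fun j => g (N - j)%nat) N <= sm g (S N)).
  { pose proof (sm_rev (fun i => g (S i)) N) as Hr. cbv beta in Hr.
    rewrite (sm_ext (fun j => g (N - j)%nat) (fun i => g (S (N - 1 - i)))) by (intros; f_equal; lia).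
    rewrite Hr, (sm_first g N). pose proof (Hg0 0%nat). lra. }
  assert (R2 : sm g N <= sm g (S N)) by (simpl; pose proof (Hg0 N); lra).
  destruct (nat_above (INR N / tau)) as [J [HJ1 [HJa HJb]]]; [apply Rdiv_lt_0_compat; lra|].
  assert (HJr : 1 <= INR J) by (apply (le_INR 1); auto).
  assert (R3 : sm g (S N) <= INR J + 1 + 1 / (al * INR J)).
  { destruct (le_lt_dec J N) as [HJN|HJN].
    - eapply Rle_trans; [apply (gsum_tail al J Hal HJ1 N HJN)|].
      assert (0 < 1 / INR N) by (apply Rdiv_lt_0_compat; lra).
      replace (1 / (al * INR J)) with (1 / al * (1 / INR J)) by (field; lra).
      assert (0 < 1/al) by (apply Rdiv_lt_0_compat; lra). nra.
    - eapply Rle_trans; [apply (sm_le_const g (S N) 1); intros; auto|].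
      assert (INR (S N) <= INR J) by (apply le_INR; lia).
      assert (0 < 1 / (al * INR J)) by (apply Rdiv_lt_0_compat; nra). lra. }
  assert (R4 : 1 / (al * INR J) <= INR N / tau).
  { assert (HKp : 0 < K) by nra. unfold al.
    replace (1 / (K / INR N ^ 2 * INR J)) with (INR N ^ 2 / (K * INR J)) by (field; repeat split; lra).
    apply Rmult_le_reg_r with (K * INR J * tau); [apply Rmult_lt_0_compat; [nra|lra]|].
    unfold Rdiv. replace (INR N ^ 2 * / (K * INR J) * (K * INR J * tau)) with (INR N ^ 2 * tau) by (field; repeat split; lra).
    replace (INR N * / tau * (K * INR J * tau)) with (INR N * K * INR J) by (field; lra).
    assert (INR N < tau * INR J).
    { apply Rmult_lt_reg_r with (/ tau). apply Rinv_0_lt_compat; lra.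
      replace (tau * INR J * / tau) with (INR J) by (field; lra). unfold Rdiv in HJa. lra. }
    assert (A1 : INR N * tau * INR N <= INR N * tau * (tau * INR J)) by (apply Rmult_le_compat_l; nra).
    assert (A2 : tau ^ 2 * (INR N * INR J) <= K * (INR N * INR J)) by (apply Rmult_le_compat_r; nra).
    nra. }
  assert (R5 : 1 <= INR N / tau) by (apply Rmult_le_reg_r with tau; [lra|]; unfold Rdiv; rewrite Rmult_assoc, Rinv_l; lra).
  replace (INR N * (8 / tau)) with (8 * (INR N / tau)) by (field; lra).
  lra. Qed.

Lemma cf_bound a b M r tau : 0 < r < 1 -> 0 < tau ->
  tau ^ 2 <= r * (INR b / (1 + r) ^ 2 - INR a / (1 - r) ^ 2) ->
  Rabs (cf a b M) * r ^ M <= (1 - r) ^ a * (1 + r) ^ b * (8 / tau).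
Proof. intros Hr Ht HK.
  assert (HF : 0 <= (1 - r) ^ a * (1 + r) ^ b) by (apply Rmult_le_pos; apply pow_le; lra).
  assert (H8 : 0 < 8 / tau) by (apply Rdiv_lt_0_compat; lra).
  destruct (le_lt_dec M (a + b)) as [HM|HM].
  2:{ rewrite cf_zero by lia. rewrite Rabs_R0, Rmult_0_l. nra. }
  destruct (nat_above tau Ht) as [J [HJ1 [HJa _]]].
  set (N := Nat.max (S (a + b)) J).
  assert (HN1 : (a + b < N)%nat) by (unfold N; lia).
  assert (HNJ : INR J <= INR N) by (apply le_INR; unfold N; lia).
  assert (HNp : 0 < INR N) by (apply lt_0_INR; lia).
  pose proof (coef_filter (cf a b) (a + b) M N r HM HN1 (Rlt_le _ _ (proj1 Hr))) as H1.
  set (K := r * (INR b / (1 + r) ^ 2 - INR a / (1 - r) ^ 2)) in *.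
  assert (H2 : sm (fun j => Cmod (ceval (cf a b) (zc r (INR j * (2 * PI / INR N))) (a + b))) N
     <= (1 - r) ^ a * (1 + r) ^ b * sm (fun j => exp (- K * (1 - cos (INR j * (2 * PI / INR N))))) N).
  { rewrite <- sm_scal. apply sm_le. intros j _. eapply Rle_trans; [apply cmod_bound; lra|].
    right. unfold K. f_equal. }
  pose proof (gauss_sum K tau N Ht HK ltac:(lia) ltac:(lra)) as H3.
  assert (H4 : INR N * (Rabs (cf a b M) * r ^ M) <= INR N * ((1 - r) ^ a * (1 + r) ^ b * (8 / tau))).
  { eapply Rle_trans; [exact H1|]. eapply Rle_trans; [exact H2|].
    replace (INR N * ((1 - r) ^ a * (1 + r) ^ b * (8 / tau))) with ((1 - r) ^ a * (1 + r) ^ b * (INR N * (8 / tau))) by ring.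
    apply Rmult_le_compat_l; auto. }
  apply Rmult_le_reg_l with (INR N); auto. Qed.

Lemma q_coef_cf n s y a b : IZR s = INR b -> INR n - IZR s = INR a -> (0 <= s - y)%Z ->
  q_coef n s y = cf a b (Z.to_nat (s - y)).
Proof. intros H1 H2 H3. unfold q_coef.
  destruct (Z.ltb_spec (s - y) 0); [lia|].
  rewrite sum_f_R0_sm, H2, H1. reflexivity. Qed.

Lemma q_coef_neg n s y : (s - y < 0)%Z -> q_coef n s y = 0.
Proof. intros H. unfold q_coef. destruct (Z.ltb_spec (s - y) 0); [auto|lia]. Qed.

Lemma incr0 (h dh : R -> R) x : 0 <= x ->
  (forall t, 0 <= t <= x -> is_derive h t (dh t)) ->
  (forall t, 0 <= t <= x -> 0 <= dh t) -> h 0 <= h x.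
Proof. intros Hx Hd Hp. destruct (Req_dec x 0) as [E|E]; [subst; lra|].
  destruct (MVT_gen h 0 x dh) as [c [Hc Eq]].
  - intros t Ht. rewrite Rmin_left, Rmax_right in Ht by lra. apply Hd; lra.
  - intros t Ht. rewrite Rmin_left, Rmax_right in Ht by lra.
    apply continuity_pt_filterlim. apply (ex_derive_continuous h t). exists (dh t). apply Hd; lra.
  - rewrite Rmin_left, Rmax_right in Hc by lra. pose proof (Hp c Hc). nra. Qed.

Lemma expm_ub e : 0 <= e -> exp (- e) <= 1 - e + e ^ 2 / 2.
Proof. intros He.
  pose proof (incr0 (fun t => 1 - t + t ^ 2 / 2 - exp (- t)) (fun t => -1 + t + exp (- t)) e He) as H.
  simpl in H. rewrite Ropp_0, exp_0 in H.
  assert (0 <= 1 - e + e * (e * 1) / 2 - exp (- e)); [|simpl; lra].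
  eapply Rle_trans; [|apply H]. lra.
  - intros t _. auto_derive; auto. field.
  - intros t _. pose proof (exp_ineq1_le (- t)). lra. Qed.

Lemma expm_lb e : 0 <= e -> 1 - e + e ^ 2 / 2 - e ^ 3 / 6 <= exp (- e).
Proof. intros He.
  pose proof (incr0 (fun t => exp (- t) - 1 + t - t ^ 2 / 2 + t ^ 3 / 6) (fun t => - exp (- t) + 1 - t + t ^ 2 / 2) e He) as H.
  simpl in H. rewrite Ropp_0, exp_0 in H.
  assert (0 <= exp (- e) - 1 + e - e * (e * 1) / 2 + e * (e * (e * 1)) / 6); [|simpl in *; lra].
  eapply Rle_trans; [|apply H]. lra.
  - intros t _. auto_derive; auto. field.
  - intros t Ht. pose proof (expm_ub t (proj1 Ht)). lra. Qed.

Lemma ln1p_ub y : 0 <= y -> ln (1 + y) <= y - y ^ 2 / 2 + y ^ 3 / 3.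
Proof. intros Hy.
  pose proof (incr0 (fun t => t - t ^ 2 / 2 + t ^ 3 / 3 - ln (1 + t)) (fun t => t ^ 3 / (1 + t)) y Hy) as H.
  simpl in H. rewrite Rplus_0_r, ln_1 in H.
  assert (0 <= y - y * (y * 1) / 2 + y * (y * (y * 1)) / 3 - ln (1 + y)); [|simpl in *; lra].
  eapply Rle_trans; [|apply H]. lra.
  - intros t Ht. auto_derive. lra. field. lra.
  - intros t Ht. apply Rdiv_le_0_compat. simpl. assert (0 <= t * t) by nra. nra. lra. Qed.

Lemma ln1m_ub x : 0 <= x < 1 -> ln (1 - x) <= - x - x ^ 2 / 2.
Proof. intros Hx.
  pose proof (incr0 (fun t => - t - t ^ 2 / 2 - ln (1 - t)) (fun t => t ^ 2 / (1 - t)) x (proj1 Hx)) as H.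
  simpl in H. rewrite Rminus_0_r, ln_1 in H.
  assert (0 <= - x - x * (x * 1) / 2 - ln (1 - x)); [|simpl in *; lra].
  eapply Rle_trans; [|apply H]. lra.
  - intros t Ht. auto_derive. lra. field. lra.
  - intros t Ht. apply Rdiv_le_0_compat. nra. lra. Qed.

Lemma floorZ_spec r : IZR (floorZ r) <= r < IZR (floorZ r) + 1.
Proof. unfold floorZ. rewrite minus_IZR. destruct (archimed r). simpl. lra. Qed.

Lemma s2_facts : sqrt 2 * sqrt 2 = 2 /\ 1.414 < sqrt 2 < 1.4143.
Proof. assert (E : sqrt 2 * sqrt 2 = 2) by (apply sqrt_sqrt; lra).
  split; auto. pose proof (sqrt_pos 2). split.
  - destruct (Rlt_le_dec 1.414 (sqrt 2)); auto. nra.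
  - destruct (Rlt_le_dec (sqrt 2) 1.4143); auto. nra. Qed.

Lemma ln_s2 : ln (sqrt 2) = ln 2 / 2.
Proof. destruct s2_facts as [E _]. pose proof (sqrt_lt_R0 2 ltac:(lra)).
  rewrite <- E at 2. rewrite ln_mult by lra. lra. Qed.

Lemma Rpower_le1 y : y <= 0 -> 0 < Rpower 2 y <= 1.
Proof. intros. unfold Rpower. split; [apply exp_pos|]. rewrite <- exp_0. apply exp_mono.
  pose proof ln_lt_2. nra. Qed.

Lemma cube_facts n : (1 <= n)%nat ->
  0 < cube_root_n n /\ cube_root_n n ^ 3 = INR n /\ Rpower (INR n) (2/3) = cube_root_n n ^ 2.
Proof. intros Hn. assert (Hp : 0 < INR n) by (apply lt_0_INR; lia). unfold cube_root_n.
  split; [unfold Rpower; apply exp_pos|]. split.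
  - rewrite <- Rpower_pow by (unfold Rpower; apply exp_pos). rewrite Rpower_mult.
    replace (1/3 * INR 3) with 1 by (simpl; field). apply Rpower_1; auto.
  - rewrite <- Rpower_pow by (unfold Rpower; apply exp_pos). rewrite Rpower_mult. f_equal. simpl. field. Qed.

Lemma pow_as_exp x m : 0 < x -> x ^ m = exp (INR m * ln x).
Proof. intros. rewrite <- exp_pow, exp_ln; auto. Qed.

Lemma poly_core (nr s j e p ell : R) :
  j * j = 1/2 -> 0.7 < j < 0.71 -> 0 < e <= 0.4 ->
  e - e ^ 2 / 2 <= p <= e - e ^ 2 / 2 + e ^ 3 / 6 -> 0 <= s <= nr -> 2 * s <= nr * (1 + j) + ell ->
  (nr - s) * (j * p - (j * p) ^ 2 / 2 + (j * p) ^ 3 / 3) + s * (- ((1 - j) * p) - ((1 - j) * p) ^ 2 / 2)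
    + (s - nr * j) * e <= e ^ 2 / 2 * ell * j + nr * e ^ 3.
Proof. intros Hj2 Hj He Hp Hs Hsl.
  remember (e - e ^ 2 / 2) as Pl eqn:HPleq.
  assert (HPl : 0 <= Pl) by (rewrite HPleq; assert (e ^ 2 = e * e) by ring; nra).
  assert (Hp0 : 0 <= p) by lra. assert (Hpe : p <= e).
  { assert (0 <= e ^ 2) by nra. assert (E3 : e ^ 3 = e * e ^ 2) by ring.
    assert (e * e ^ 2 <= 0.4 * e ^ 2) by (apply Rmult_le_compat_r; lra). lra. }
  assert (Hm : 0 <= nr - s) by lra.
  assert (A1 : (nr - s) * (j * p) <= (nr - s) * (j * (Pl + e ^ 3 / 6))).
  { apply Rmult_le_compat_l; auto. apply Rmult_le_compat_l; lra. }
  assert (A2 : - ((nr - s) * ((j * p) ^ 2 / 2)) <= - ((nr - s) * (Pl ^ 2 / 4))).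
  { apply Ropp_le_contravar. apply Rmult_le_compat_l; auto.
    replace ((j * p) ^ 2 / 2) with (p ^ 2 / 4) by (replace ((j * p) ^ 2) with ((j * j) * p ^ 2) by ring; rewrite Hj2; field).
    assert (Pl ^ 2 <= p ^ 2) by (apply pow_incr; lra). lra. }
  assert (A3 : (nr - s) * ((j * p) ^ 3 / 3) <= (nr - s) * (j * e ^ 3 / 6)).
  { apply Rmult_le_compat_l; auto.
    replace ((j * p) ^ 3 / 3) with (j * p ^ 3 / 6) by (replace ((j * p) ^ 3) with ((j * j) * j * p ^ 3) by ring; rewrite Hj2; field).
    assert (p ^ 3 <= e ^ 3) by (apply pow_incr; lra). nra. }
  assert (A4 : s * (- ((1 - j) * p)) <= s * (- ((1 - j) * Pl))).
  { apply Rmult_le_compat_l; [lra|]. apply Ropp_le_contravar. apply Rmult_le_compat_l; lra. }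
  assert (A5 : s * (- (((1 - j) * p) ^ 2 / 2)) <= s * (- ((3/2 - 2 * j) * Pl ^ 2 / 2))).
  { apply Rmult_le_compat_l; [lra|]. apply Ropp_le_contravar.
    replace (((1 - j) * p) ^ 2 / 2) with ((3/2 - 2 * j) * p ^ 2 / 2) by (replace (((1 - j) * p) ^ 2) with ((1 - 2 * j + j * j) * p ^ 2) by ring; rewrite Hj2; field).
    assert (Pl ^ 2 <= p ^ 2) by (apply pow_incr; lra). nra. }
  assert (N1 : 0 <= e ^ 2 / 2 * (nr * j + nr / 2 + ell * j - 2 * s * j)).
  { apply Rmult_le_pos; [nra|]. assert (2 * s * j <= (nr * (1 + j) + ell) * j) by (apply Rmult_le_compat_r; lra).
    replace ((nr * (1 + j) + ell) * j) with (nr * j + nr * (j * j) + ell * j) in H by ring. rewrite Hj2 in H. lra. }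
  assert (N2 : 0 <= e ^ 3 * ((nr - s) * (3/4 - j/3) + s * (1/4 + j))).
  { apply Rmult_le_pos; [apply pow_le; lra|]. apply Rplus_le_le_0_compat; apply Rmult_le_pos; lra. }
  assert (N3 : 0 <= (nr - s) * e ^ 4 / 16) by (assert (0 <= e ^ 4) by (apply pow_le; lra); nra).
  assert (N4 : 0 <= s * (3/16 - j/4) * e ^ 4) by (assert (0 <= e ^ 4) by (apply pow_le; lra); apply Rmult_le_pos; [apply Rmult_le_pos|]; lra).
  subst Pl.
  assert (E : e ^ 2 / 2 * ell * j + nr * e ^ 3 -
    ((nr - s) * (j * (e - e ^ 2 / 2 + e ^ 3 / 6)) - (nr - s) * ((e - e ^ 2 / 2) ^ 2 / 4) + (nr - s) * (j * e ^ 3 / 6)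
     + s * (- ((1 - j) * (e - e ^ 2 / 2))) + s * (- ((3/2 - 2 * j) * (e - e ^ 2 / 2) ^ 2 / 2)) + (s - nr * j) * e)
    = e ^ 2 / 2 * (nr * j + nr / 2 + ell * j - 2 * s * j) + e ^ 3 * ((nr - s) * (3/4 - j/3) + s * (1/4 + j))
      + (nr - s) * e ^ 4 / 16 + s * (3/16 - j/4) * e ^ 4) by field.
  lra. Qed.

Theorem proposition5p4 (L : R) :
  exists c C : R, 0 < c /\
    exists N : nat, forall n : nat, (N <= n)%nat ->
      forall x xi : R, 0 <= x ->
        Rabs (Q_n n L x xi) <= C * exp (- c * (x + xi)).
Proof.
  set (s2 := sqrt 2). destruct s2_facts as [Es2 [Hs2a Hs2b]]. fold s2 in Es2, Hs2a, Hs2b.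
  set (lam := ln (s2 + 1)).
  assert (Hlam : 0 < lam) by (unfold lam; rewrite <- ln_1; apply ln_increasing; lra).
  set (a5 := Rpower 2 (-5/6)). set (a1 := Rpower 2 (-1/6)).
  assert (Ha5 : 0 < a5 <= 1) by (apply Rpower_le1; lra).
  assert (Ha1 : 0 < a1 <= 1) by (apply Rpower_le1; lra).
  set (AL := Rabs L). assert (HAL : 0 <= AL) by apply Rabs_pos.
  set (c' := 40 * (AL + 1)). set (T0 := 100 * (AL + 1)).
  set (E0 := lam + 2 + AL * c' ^ 2 + c' ^ 3).
  exists (c' * a5), (24 * exp E0). split; [unfold c'; nra|].
  exists (S (Z.to_nat (up (T0 ^ 3)))). intros n Hn x xi Hx.
  assert (Hn1 : (1 <= n)%nat) by lia.
  destruct (cube_facts n Hn1) as [HT [HT3 HT2]].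
  set (T := cube_root_n n) in *.
  assert (HT0 : T0 <= T).
  { assert (HT0p : 0 < T0) by (unfold T0; lra).
    assert (T0 ^ 3 <= INR n).
    { destruct (archimed (T0 ^ 3)) as [A _].
      assert (0 < up (T0 ^ 3))%Z by (apply lt_IZR; pose proof (pow_lt T0 3 HT0p); lra).
      assert (IZR (up (T0 ^ 3)) <= INR n); [|lra].
      rewrite <- (Znat.Z2Nat.id (up (T0 ^ 3))) by lia. rewrite <- INR_IZR_INZ. apply le_INR. lia. }
    destruct (Rle_lt_dec T0 T); auto. exfalso.
    assert (T ^ 3 < T0 ^ 3); [|lra].
    assert (T0 ^ 3 - T ^ 3 = (T0 - T) * (T0 ^ 2 + T0 * T + T ^ 2)) by ring.
    assert (0 < (T0 - T) * (T0 ^ 2 + T0 * T + T ^ 2)) by (apply Rmult_lt_0_compat; nra). lra. }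
  assert (HTp : 1 <= T) by (unfold T0 in HT0; lra).
  set (nr := INR n) in *.
  set (ell := a1 * L * T ^ 2).
  assert (Hell : Rabs ell <= AL * T ^ 2).
  { unfold ell, AL. rewrite !Rabs_mult, (Rabs_pos_eq a1), (Rabs_pos_eq (T^2)) by (try lra; nra). 
    pose proof (Rabs_pos L). assert (0 <= Rabs L * T ^ 2) by nra. nra. }
  assert (Hellb : - (AL * T ^ 2) <= ell <= AL * T ^ 2) by (apply Rabs_le_between; auto).
  unfold Q_n. fold T a5.
  set (s := floorZ (b_n n L / 2)).
  assert (Hbb : b_n n L = nr * (1 + 1 / s2) + ell) by (unfold b_n, ell; fold nr s2; rewrite HT2; fold a1; ring).
  destruct (floorZ_spec (b_n n L / 2)) as [Hs1 Hs2]. fold s in Hs1, Hs2. rewrite Hbb in Hs1, Hs2.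
  set (i := i_idx n x). set (u := u_idx n xi).
  destruct (floorZ_spec (a5 * x * T)) as [Hi1 Hi2].
  destruct (floorZ_spec (INR n / sqrt 2 + a5 * xi * T)) as [Hu1 Hu2].
  change (floorZ (a5 * x * T)) with i in Hi1, Hi2.
  change (floorZ (INR n / sqrt 2 + a5 * xi * T)) with u in Hu1, Hu2. fold nr s2 in Hu1, Hu2.
  change (INR n) with nr. rewrite HT2. change (sqrt 2) with s2. change (Rpower 2 (-1/6)) with a1.
  fold lam.
  assert (HC : 0 < 24 * exp E0) by (pose proof (exp_pos E0); lra).
  destruct (Z_lt_le_dec (s - (u + i)) 0) as [Hneg|Hpos].
  { rewrite q_coef_neg by auto. rewrite Rmult_0_r, Rabs_R0. pose proof (exp_pos (- (c' * a5) * (x + xi))). nra. }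
  set (j := 1 / s2).
  assert (Hj2 : j * j = 1/2) by (unfold j; replace (1 / s2 * (1 / s2)) with (1 / (s2 * s2)) by (field; lra); rewrite Es2; lra).
  assert (Hjs : j * s2 = 1) by (unfold j; field; lra).
  assert (Hj : 0.7070 < j < 0.7073) by (unfold j; split; [apply Rmult_lt_reg_r with s2|apply Rmult_lt_reg_r with s2]; try lra; unfold Rdiv; rewrite Rmult_assoc, Rinv_l, Rmult_1_r; lra).
  assert (Hnr : T ^ 3 = nr) by auto.
  assert (HT2p : 1 <= T ^ 2) by nra.
  assert (HnT : nr = T * T ^ 2) by (rewrite <- Hnr; ring).
  replace (1 / s2) with j in Hs1, Hs2, Hbb by reflexivity.
  replace (nr / s2) with (nr * j) in Hu1, Hu2 by (unfold j; field; lra).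
  assert (Hnr0 : 0 <= nr) by (rewrite HnT; nra).
  assert (Hnrj : 0.7070 * nr <= nr * j <= 0.7073 * nr) by (split; nra).
  assert (Hsl : nr / 2 <= IZR s).
  { assert (AL * T ^ 2 + 2 <= 0.7 * nr); [|nra].
    rewrite HnT. assert (T0 * T ^ 2 <= T * T ^ 2) by nra. unfold T0 in *. nra. }
  assert (Hsu : IZR s <= nr).
  { assert (AL * T ^ 2 <= 0.29 * nr); [|nra].
    rewrite HnT. assert (T0 * T ^ 2 <= T * T ^ 2) by nra. unfold T0 in *. nra. }
  assert (Hs0 : (0 <= s)%Z) by (apply le_IZR; lra).
  assert (Hsn : (s <= Z.of_nat n)%Z) by (apply le_IZR; rewrite <- INR_IZR_INZ; fold nr; lra).
  set (a := Z.to_nat (Z.of_nat n - s)). set (b := Z.to_nat s).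
  assert (Ha : INR a = nr - IZR s) by (unfold a; rewrite INR_IZR_INZ, Znat.Z2Nat.id, minus_IZR, <- INR_IZR_INZ by lia; auto).
  assert (Hb : INR b = IZR s) by (unfold b; rewrite INR_IZR_INZ, Znat.Z2Nat.id by lia; auto).
  set (M := Z.to_nat (s - (u + i))).
  assert (HM : INR M = IZR s - IZR u - IZR i) by (unfold M; rewrite INR_IZR_INZ, Znat.Z2Nat.id, minus_IZR, plus_IZR by lia; ring).
  rewrite (q_coef_cf n s (u + i) a b) by (try lra; try lia; fold nr; lra).
  fold M.
  set (eps := c' / T).
  assert (Heps : 0 < eps <= 0.4).
  { unfold eps. split. apply Rdiv_lt_0_compat; unfold c'; lra.
    apply Rmult_le_reg_r with T; [lra|]. unfold Rdiv. rewrite Rmult_assoc, Rinv_l, Rmult_1_r by lra.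
    unfold c', T0 in *. lra. }
  assert (HepsT : eps * T = c') by (unfold eps; field; lra).
  set (p := 1 - exp (- eps)).
  assert (Hp : eps - eps ^ 2 / 2 <= p <= eps - eps ^ 2 / 2 + eps ^ 3 / 6).
  { unfold p. pose proof (expm_ub eps ltac:(lra)). pose proof (expm_lb eps ltac:(lra)). lra. }
  assert (Hp0 : 0.8 * eps <= p <= eps) by (split; nra).
  set (rc := exp (- lam)).
  assert (Hrc : rc = s2 - 1).
  { unfold rc, lam. rewrite exp_Ropp, exp_ln by lra. field_simplify_eq; [nra|lra]. }
  set (r := exp (- (lam + eps))).
  assert (Hr : r = rc * (1 - p)) by (unfold r, rc, p; rewrite Ropp_plus_distr, exp_plus; ring).
  set (k := 1 - j).
  assert (H1mr : 1 - r = (2 - s2) * (1 + j * p)).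
  { rewrite Hr, Hrc. replace ((2 - s2) * (1 + j * p)) with (2 - s2 + (2 * j - j * s2) * p) by ring.
    rewrite Hjs. replace (2 * j) with s2; [ring|]. apply Rmult_eq_reg_r with s2; [|lra].
    replace (2 * j * s2) with (2 * (j * s2)) by ring. rewrite Hjs. lra. }
  assert (H2j : 2 * j = s2) by (apply Rmult_eq_reg_r with s2; [|lra]; replace (2 * j * s2) with (2 * (j * s2)) by ring; rewrite Hjs; lra).
  assert (H1pr : 1 + r = s2 * (1 - k * p)).
  { rewrite Hr, Hrc. unfold k. replace (s2 * (1 - (1 - j) * p)) with (s2 - s2 * p + j * s2 * p) by ring.
    rewrite Hjs. ring. }
  assert (Hr01 : 0.24 < r < 0.42) by (rewrite Hr, Hrc; split; nra).
  assert (Hk : 0.2927 < k < 0.2930) by (unfold k; lra).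
  assert (Hkp : 0 <= k * p <= 0.12) by (split; nra).
  assert (HD1 : IZR s * (1 + 2 * (k * p)) / 2 <= INR b / (1 + r) ^ 2).
  { rewrite Hb, H1pr. replace ((s2 * (1 - k * p)) ^ 2) with (2 * (1 - k * p) ^ 2) by (rewrite Rpow_mult_distr; replace (s2 ^ 2) with 2 by (simpl; nra); ring).
    set (q := k * p) in *. assert (0 < (1 - q) ^ 2) by (apply pow_lt; lra).
    apply Rmult_le_reg_r with (2 * (1 - q) ^ 2); [lra|].
    replace (IZR s / (2 * (1 - q) ^ 2) * (2 * (1 - q) ^ 2)) with (IZR s) by (field; lra).
    replace (IZR s * (1 + 2 * q) / 2 * (2 * (1 - q) ^ 2)) with (IZR s * ((1 + 2 * q) * (1 - q) ^ 2)) by (field; lra).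
    assert ((1 + 2 * q) * (1 - q) ^ 2 <= 1) by nra.
    assert (0 <= IZR s) by lra. nra. }
  assert (HD2 : INR a / (1 - r) ^ 2 <= INR a * (3 + 2 * s2) / 2).
  { assert (HA0 : 0 <= INR a) by apply pos_INR.
    rewrite H1mr. assert (E6 : (2 - s2) ^ 2 = 6 - 4 * s2) by (simpl; rewrite Rmult_1_r; nra).
    assert (Hbig : (2 - s2) ^ 2 <= ((2 - s2) * (1 + j * p)) ^ 2).
    { rewrite Rpow_mult_distr. assert (1 <= (1 + j * p) ^ 2) by (assert (0 <= j * p) by nra; nra). 
      assert (0 <= (2 - s2) ^ 2) by nra. nra. }
    assert (Hpos6 : 0 < (2 - s2) ^ 2) by nra.
    apply Rle_trans with (INR a / (2 - s2) ^ 2).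
    - unfold Rdiv. apply Rmult_le_compat_l; auto. apply Rinv_le_contravar; auto.
    - rewrite E6. apply Rmult_le_reg_r with (6 - 4 * s2); [lra|].
      replace (INR a / (6 - 4 * s2) * (6 - 4 * s2)) with (INR a) by (field; lra).
      replace (INR a * (3 + 2 * s2) / 2 * (6 - 4 * s2)) with (INR a * ((18 - 8 * (s2 * s2)) / 2)) by field.
      rewrite Es2. lra. }
  set (tau := T / 3).
  assert (Htau : 0 < tau) by (unfold tau; lra).
  assert (HK : tau ^ 2 <= r * (INR b / (1 + r) ^ 2 - INR a / (1 - r) ^ 2)).
  { assert (HDlow : T ^ 2 <= INR b / (1 + r) ^ 2 - INR a / (1 - r) ^ 2).
    { eapply Rle_trans; [|apply Rplus_le_compat; [exact HD1| apply Ropp_le_contravar; exact HD2]].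
      rewrite Ha.
      replace (IZR s * (1 + 2 * (k * p)) / 2 + - ((nr - IZR s) * (3 + 2 * s2) / 2))
        with ((IZR s * (4 + 2 * s2) - nr * (3 + 2 * s2)) / 2 + IZR s * (k * p)) by field.
      assert (Hkey : IZR s * (4 + 2 * s2) >= nr * (3 + 2 * s2) + (ell - 2) * (2 + s2)).
      { assert (H2s : 2 * IZR s >= nr * (1 + j) + ell - 2) by lra.
        assert (E3 : nr * (1 + j) * (2 + s2) = nr * (3 + 2 * s2)).
        { replace (nr * (1 + j) * (2 + s2)) with (nr * (2 + s2 + 2 * j + j * s2)) by ring. rewrite Hjs, H2j. ring. }
        assert (2 * IZR s * (2 + s2) >= (nr * (1 + j) + ell - 2) * (2 + s2)) by (apply Rmult_ge_compat_r; lra).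
        replace (IZR s * (4 + 2 * s2)) with (2 * IZR s * (2 + s2)) by ring.
        replace (nr * (3 + 2 * s2) + (ell - 2) * (2 + s2)) with ((nr * (1 + j) + ell - 2) * (2 + s2)) by (rewrite <- E3; ring).
        auto. }
      assert (Hskp : nr / 2 * (0.2927 * (0.8 * eps)) <= IZR s * (k * p)).
      { apply Rmult_le_compat; [lra| apply Rmult_le_pos; lra | lra | apply Rmult_le_compat; lra]. }
      assert (Hnreps : nr * eps = c' * T ^ 2) by (rewrite HnT, <- HepsT; ring).
      assert (Hell2 : (ell - 2) * (2 + s2) >= - (AL * T ^ 2 + 2) * 3.42).
      { assert (0 <= AL * T ^ 2 + 2 + (ell - 2)) by lra.
        assert ((AL * T ^ 2 + 2 + (ell - 2)) * (2 + s2) >= 0) by (apply Rle_ge, Rmult_le_pos; lra).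
        assert ((AL * T ^ 2 + 2) * (2 + s2) <= (AL * T ^ 2 + 2) * 3.42) by (apply Rmult_le_compat_l; [assert (0 <= AL * T ^ 2) by (apply Rmult_le_pos; lra); lra|lra]).
        lra. }
      set (W := AL * T ^ 2) in *. set (V := T ^ 2) in *.
      assert (Hc'V : c' * V = 40 * W + 40 * V) by (unfold c', W, V; ring).
      assert (Hne : nr / 2 * (0.2927 * (0.8 * eps)) = 0.11708 * (nr * eps)) by lra.
      lra. }
    unfold tau. assert (T ^ 2 * 0.24 <= r * (INR b / (1 + r) ^ 2 - INR a / (1 - r) ^ 2))
      by (rewrite Rmult_comm; apply Rmult_le_compat; lra).
    replace ((T / 3) ^ 2) with (T ^ 2 / 9) by field. lra. }
  pose proof (cf_bound a b M r tau ltac:(lra) Htau HK) as Hcf.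
  assert (Hlnr : ln r = - (lam + eps)) by (unfold r; apply ln_exp).
  assert (Hrc_exp : rc = exp (- lam)) by reflexivity.
  assert (Hln2s2 : ln s2 = ln 2 / 2) by (unfold s2; apply ln_s2).
  assert (Hjp : 0 <= j * p) by nra.
  assert (HL1 : ln (1 - r) <= ln 2 / 2 - lam + (j * p - (j * p) ^ 2 / 2 + (j * p) ^ 3 / 3)).
  { rewrite H1mr. rewrite ln_mult by nra.
    assert (E2s : 2 - s2 = s2 * rc) by (rewrite Hrc; nra).
    rewrite E2s, ln_mult by lra. rewrite Hln2s2. unfold rc at 1. rewrite ln_exp.
    pose proof (ln1p_ub (j * p) Hjp). lra. }
  assert (HL2 : ln (1 + r) <= ln 2 / 2 + (- (k * p) - (k * p) ^ 2 / 2)).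
  { rewrite H1pr. rewrite ln_mult by lra. rewrite Hln2s2.
    pose proof (ln1m_ub (k * p) ltac:(lra)). lra. }
  assert (HrM : 0 < r ^ M) by (apply pow_lt; lra).
  set (F := (1 - r) ^ a * (1 + r) ^ b) in *.
  assert (HF : F = exp (INR a * ln (1 - r) + INR b * ln (1 + r))).
  { unfold F. rewrite exp_plus, <- !pow_as_exp by lra. auto. }
  assert (HrMe : r ^ M = exp (- (INR M * (lam + eps)))) by (rewrite pow_as_exp, Hlnr by lra; f_equal; ring).
  change (a1 * L * T ^ 2) with ell.
  set (Y := IZR i + a5 * xi * T - ell).
  unfold Rpower. fold lam.
  set (Ebig := - nr / 2 * ln 2 + Y * lam + (INR a * ln (1 - r) + INR b * ln (1 + r)) + INR M * (lam + eps)).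
  assert (Hcfb : Rabs (cf a b M) <= F * (24 / T) * exp (INR M * (lam + eps))).
  { assert (Rabs (cf a b M) <= F * (8 / tau) / r ^ M).
    { apply Rmult_le_reg_r with (r ^ M); auto.
      replace (F * (8 / tau) / r ^ M * r ^ M) with (F * (8 / tau)) by (field; lra). auto. }
    replace (F * (24 / T) * exp (INR M * (lam + eps))) with (F * (8 / tau) / r ^ M); auto.
    rewrite HrMe, exp_Ropp. unfold tau. field. split; [lra|apply Rgt_not_eq, exp_pos]. }
  assert (Habs : Rabs (a5 * T * exp (- nr / 2 * ln 2) * exp (Y * lam) * cf a b M)
      = a5 * T * exp (- nr / 2 * ln 2) * exp (Y * lam) * Rabs (cf a b M)).
  { rewrite Rabs_mult. f_equal. apply Rabs_pos_eq.
    pose proof (exp_pos (- nr / 2 * ln 2)). pose proof (exp_pos (Y * lam)). 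
    apply Rmult_le_pos; [|lra]. apply Rmult_le_pos; [|lra]. apply Rmult_le_pos; lra. }
  rewrite Habs.
  assert (Hstep : a5 * T * exp (- nr / 2 * ln 2) * exp (Y * lam) * Rabs (cf a b M) <= 24 * a5 * exp Ebig).
  { apply Rle_trans with (a5 * T * exp (- nr / 2 * ln 2) * exp (Y * lam) * (F * (24 / T) * exp (INR M * (lam + eps)))).
    - apply Rmult_le_compat_l; auto.
      pose proof (exp_pos (- nr / 2 * ln 2)). pose proof (exp_pos (Y * lam)). 
      apply Rmult_le_pos; [|lra]. apply Rmult_le_pos; [|lra]. apply Rmult_le_pos; lra.
    - right. unfold Ebig. rewrite HF, !exp_plus. field. lra. }
  assert (HE : Ebig <= E0 - c' * a5 * (x + xi)).
  { unfold Ebig, Y.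
    assert (Ha0 : 0 <= INR a) by apply pos_INR. assert (Hb0 : 0 <= INR b) by apply pos_INR.
    assert (B1 : INR a * ln (1 - r) <= INR a * (ln 2 / 2 - lam + (j * p - (j * p) ^ 2 / 2 + (j * p) ^ 3 / 3)))
      by (apply Rmult_le_compat_l; auto).
    assert (B2 : INR b * ln (1 + r) <= INR b * (ln 2 / 2 + (- (k * p) - (k * p) ^ 2 / 2)))
      by (apply Rmult_le_compat_l; auto).
    rewrite Ha in B1. rewrite Hb in B2. rewrite HM.
    pose proof (poly_core nr (IZR s) j eps p ell Hj2 ltac:(lra) Heps Hp ltac:(lra) ltac:(lra)) as PC.
    fold k in PC.
    assert (B3 : lam * (2 * IZR s - nr - ell + a5 * xi * T - IZR u) <= lam * 1) by (apply Rmult_le_compat_l; lra).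
    assert (B4 : eps * (IZR s - IZR u - IZR i) <= eps * (IZR s - nr * j + 2 - a5 * T * (x + xi))) by (apply Rmult_le_compat_l; lra).
    assert (B5 : eps * (a5 * T * (x + xi)) = c' * a5 * (x + xi)) by (rewrite <- HepsT; ring).
    assert (B6 : ell * j <= AL * T ^ 2).
    { assert (ell * j <= Rabs ell * j) by (apply Rmult_le_compat_r; [lra| apply Rle_abs]).
      assert (Rabs ell * j <= Rabs ell * 1) by (apply Rmult_le_compat_l; [apply Rabs_pos|lra]). lra. }
    assert (B7 : eps ^ 2 / 2 * ell * j <= AL * c' ^ 2).
    { assert (eps ^ 2 / 2 * (ell * j) <= eps ^ 2 / 2 * (AL * T ^ 2)) by (apply Rmult_le_compat_l; [nra|lra]).
      assert (eps ^ 2 / 2 * (AL * T ^ 2) = AL * c' ^ 2 / 2) by (rewrite <- HepsT; field).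
      assert (0 <= AL * c' ^ 2) by (apply Rmult_le_pos; [lra|nra]). lra. }
    assert (B8 : nr * eps ^ 3 = c' ^ 3) by (rewrite <- HepsT, <- Hnr; ring).
    rewrite Ha, Hb. unfold E0. lra. }
  apply Rle_trans with (24 * a5 * exp Ebig); auto.
  replace (24 * exp E0 * exp (- (c' * a5) * (x + xi))) with (24 * exp (E0 + - (c' * a5) * (x + xi))) by (rewrite exp_plus; ring).
  apply Rle_trans with (24 * exp Ebig).
  { pose proof (exp_pos Ebig). nra. }
  apply Rmult_le_compat_l; [lra|]. apply exp_mono. lra.
Qed.
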